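(* Let $p,k\ge 0$ be integers and $n\ge (p+1)k$. For every $\alpha\in C_n(p,k)$ with $\alpha\ne\gamma_{n,k}$, the list $\mathcal{D}_p(\alpha)$ ends with $\gamma_{n,k}=0^{n-k}1^k$.
   Context: The weight of a binary word is its number of 1's. For integers $p,k\ge 0$ and $n\ge (p+1)k$, $C_n(p,k)$ is the set of binary words of length $n$ and weight $k$ such that every prefix contains at least $p$ times as many 0's as 1's (i.e. in every prefix, #0's $\ge p\cdot$ #1's). $\gamma_{n,k}=0^{n-k}1^k$. A homogeneous transposition of a binary word exchanges a 1 and a 0 such that no 1 occurs strictly between the two exchanged positions. For a set $S$ of binary words of the same length and weight and $\alpha\in S$, the list obtained by applying the greedy algorithm for $S$ to $\alpha$ is built as follows: start with the list $(\alpha)$; repeatedly, for the last word $w$ of the current list, among all words obtainable from $w$ by one homogeneous transposition that lie in $S$ and do not already occur in the list, choose the one obtained by transposing the leftmost possible 1 with (among transpositions of that 1) the leftmost possible 0, and append it; stop when no such word exists. $\mathcal{D}_p(\alpha)$ denotes the list obtained by applying the greedy algorithm for $C_n(p,k)$ to $\alpha\in C_n(p,k)$. *)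

(* Defs.v *)
(* Binary words are seq bool, with true = 1 and false = 0. *)
From mathcomp Require Import all_boot.
Set Implicit Arguments. Unset Strict Implicit. Unset Printing Implicit Defensive.

Definition word := seq bool.

Definition weight (w : word) : nat := count id w.
Definition zeros (w : word) : nat := count negb w.

Definition inC (n p k : nat) (w : word) : bool :=
  [&& size w == n, weight w == k &
      all (fun m => p * weight (take m w) <= zeros (take m w)) (iota 0 n.+1)].

Definition gamma (n k : nat) : word := nseq (n - k) false ++ nseq k true.

Definition swap (w : word) (i j : nat) : word :=
  set_nth false (set_nth false w i false) j true.

Definition between (i j : nat) : seq nat :=
  iota (minn i j).+1 ((maxn i j - minn i j).-1).

Definition homtrans (w : word) (i j : nat) : bool :=
  [&& i < size w, j < size w, nth false w i, ~~ nth false w j &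
      all (fun m => ~~ nth false w m) (between i j)].

Definition greedy_next (S : pred word) (L : seq word) (w : word) : option word :=
  let n := size w in
  let cands := [seq swap w ij.1 ij.2 |
                 ij <- [seq (i, j) | i <- iota 0 n, j <- iota 0 n] &
                 [&& homtrans w ij.1 ij.2, S (swap w ij.1 ij.2) &
                     swap w ij.1 ij.2 \notin L]] in
  if cands is w' :: _ then Some w' else None.

Fixpoint greedy_aux (S : pred word) (fuel : nat) (L : seq word) (a : word)
  : seq word :=
  match fuel with
  | 0 => L
  | f.+1 =>
    match greedy_next S L (last a L) with
    | None => L
    | Some w' => greedy_aux S f (rcons L w') a
    end
  end.

(* All words in the list are
   distinct and of length size alpha, so at most 2^(size alpha) words occur;
   the fuel 2^(size alpha) is therefore enough for the process to stop. *)
Definition greedy (S : pred word) (alpha : word) : seq word :=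
  greedy_aux S (2 ^ size alpha) [:: alpha] alpha.

Definition Dp (n p k : nat) (alpha : word) : seq word :=
  greedy (inC n p k) alpha.

(* Main.v *)
Require Import Defs.
From mathcomp Require Import all_boot zify.
Set Implicit Arguments. Unset Strict Implicit. Unset Printing Implicit Defensive.

Definition pairs n := [seq (i, j) | i <- iota 0 n, j <- iota 0 n].
Definition lexlt (a b : nat * nat) := (a.1 < b.1) || ((a.1 == b.1) && (a.2 < b.2)).

Lemma mem_pairs n i j : ((i, j) \in pairs n) = (i < n) && (j < n).
Proof.
apply/allpairsP/andP => [[[x y] /= [Hx Hy [-> ->]]]|[Hi Hj]].
  by rewrite mem_iota in Hx; rewrite mem_iota in Hy; lia.
by exists (i, j); rewrite !mem_iota /=; split => //; lia.
Qed.

Lemma pairwise_pairs_gen a m n :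
  pairwise lexlt [seq (i, j) | i <- iota a m, j <- iota 0 n].
Proof.
elim: m a => [|m IH] a //=.
rewrite pairwise_cat IH andbT; apply/andP; split.
  apply/allrelP => x y /mapP [j _ ->] /allpairsP [[u v] /= [Hu _ ->]].
  by rewrite mem_iota in Hu; rewrite /lexlt /=; apply/orP; left; lia.
rewrite pairwise_map.
have : pairwise ltn (iota 0 n) by rewrite -sorted_pairwise ?iota_ltn_sorted //; exact: ltn_trans.
apply: sub_pairwise => x y /= H; rewrite /lexlt /= eqxx H; apply/orP; right => //.
Qed.

Lemma pairwise_pairs n : pairwise lexlt (pairs n).
Proof. exact: pairwise_pairs_gen. Qed.

Lemma lexlt_irr x : lexlt x x = false.
Proof. rewrite /lexlt; lia. Qed.

Lemma lexlt_asym x y : lexlt x y -> lexlt y x = false.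
Proof. rewrite /lexlt; case: x y => a b [c d] /=. case: eqP; case: eqP; lia. Qed.

Lemma ohead_filter_min (P : pred (nat * nat)) s x :
  pairwise lexlt s -> x \in s -> P x ->
  (forall y, y \in s -> lexlt y x -> ~~ P y) -> ohead (filter P s) = Some x.
Proof.
move=> Hpw Hx Px Hmin.
have Hf : x \in filter P s by rewrite mem_filter Px Hx.
have := pairwise_filter P Hpw.
case E: (filter P s) Hf => [|z t] //= Hin /andP [Hz _].
rewrite inE in Hin; case/orP: Hin => [/eqP -> //|Ht].
have Pz : z \in filter P s by rewrite E mem_head.
rewrite mem_filter in Pz; case/andP: Pz => Pz zs.
have := Hmin z zs (allP Hz x Ht); by rewrite Pz.
Qed.

Lemma ohead_filter_minP (P : pred (nat * nat)) s x :
  pairwise lexlt s -> ohead (filter P s) = Some x ->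
  [/\ x \in s, P x & forall y, y \in s -> lexlt y x -> ~~ P y].
Proof.
move=> Hpw.
have := pairwise_filter P Hpw.
case E: (filter P s) => [|z t] //= /andP [Hz _] [<-].
have Pz : z \in filter P s by rewrite E mem_head.
rewrite mem_filter in Pz; case/andP: Pz => Pz zs; split => // y ys Hyz.
apply/negP => Py.
have : y \in filter P s by rewrite mem_filter Py ys.
rewrite E inE; case/orP => [/eqP Hy|Hy].
  by rewrite Hy lexlt_irr in Hyz.
by rewrite (lexlt_asym (allP Hz y Hy)) in Hyz.
Qed.

Lemma ohead_filter_none (P : pred (nat * nat)) s :
  ohead (filter P s) = None <-> (forall y, y \in s -> ~~ P y).
Proof.
split.
  case E: (filter P s) => [|z t] //= _ y ys; apply/negP => Py.
  have : y \in filter P s by rewrite mem_filter Py ys.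
  by rewrite E.
move=> H; case E: (filter P s) => [|z t] //=.
have : z \in filter P s by rewrite E mem_head.
by rewrite mem_filter => /andP [Pz zs]; have := H z zs; rewrite Pz.
Qed.

Definition candP (S : pred word) (L : seq word) (w : word) (ij : nat * nat) :=
  [&& homtrans w ij.1 ij.2, S (swap w ij.1 ij.2) & swap w ij.1 ij.2 \notin L].

Lemma greedy_nextE S L w :
  greedy_next S L w =
  omap (fun ij => swap w ij.1 ij.2) (ohead (filter (candP S L w) (pairs (size w)))).
Proof. rewrite /greedy_next /pairs /candP; by case: filter. Qed.

Lemma mem_between i j m : (m \in between i j) = (minn i j < m < maxn i j).
Proof. rewrite /between mem_iota; lia. Qed.

Lemma size_swap w i j : i < size w -> j < size w -> size (swap w i j) = size w.
Proof. move=> Hi Hj; rewrite /swap !size_set_nth; lia. Qed.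

Lemma nth_swap w i j m :
  nth false (swap w i j) m = if m == j then true else if m == i then false else nth false w m.
Proof. by rewrite /swap nth_set_nth /= nth_set_nth. Qed.

Lemma swap_rcons w b i j : i < size w -> j < size w ->
  swap (rcons w b) i j = rcons (swap w i j) b.
Proof.
move=> Hi Hj; apply: (@eq_from_nth _ false).
  by rewrite size_rcons size_swap ?size_rcons // ?size_swap //; lia.
move=> m _; rewrite nth_swap !nth_rcons nth_swap size_swap //.
case: (m == j) / eqP => [->|]; first by rewrite Hj.
case: (m == i) / eqP => [->|]; first by rewrite Hi.
done.
Qed.

Lemma homtrans_rcons w b i j : i < size w -> j < size w ->
  homtrans (rcons w b) i j = homtrans w i j.
Proof.
move=> Hi Hj; rewrite /homtrans size_rcons !nth_rcons Hi Hj.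
have -> : i < (size w).+1 by lia.
have -> : j < (size w).+1 by lia.
congr [&& _, _, _, _ & _].
apply: eq_in_all => m; rewrite mem_between => Hm.
rewrite nth_rcons; have -> // : m < size w by lia.
Qed.

Definition okpre p (w : word) m := p * weight (take m w) <= zeros (take m w).

Lemma inCP n p k w :
  reflect [/\ size w = n, weight w = k & forall m, okpre p w m] (inC n p k w).
Proof.
apply: (iffP and3P) => [[/eqP Hs /eqP Hk /allP Ha]|[Hs Hk Ha]].
  split => // m; case: (leqP m n) => Hm.
    by apply: Ha; rewrite mem_iota; lia.
  have H := Ha n; rewrite mem_iota in H.
  rewrite /okpre take_oversize; last lia.
  have := H ltac:(lia); rewrite take_oversize //; lia.
by split; [apply/eqP|apply/eqP|apply/allP => m _; apply: Ha].
Qed.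

Lemma zerosE w : zeros w = size w - weight w.
Proof.
have H := count_predC id w.
have E : count (predC id) w = count negb w by apply: eq_count.
rewrite /zeros /weight; lia.
Qed.

Lemma take_rcons_le m (u : word) b : m <= size u -> take m (rcons u b) = take m u.
Proof. by move=> H; rewrite -cats1 takel_cat. Qed.

Lemma weight_rcons u b : weight (rcons u b) = weight u + b.
Proof. by rewrite /weight -cats1 count_cat /= addn0. Qed.
Lemma zeros_rcons u b : zeros (rcons u b) = zeros u + ~~ b.
Proof. by rewrite /zeros -cats1 count_cat /= addn0. Qed.

Lemma inC_pad n p k u : inC n.+1 p k (rcons u false) = inC n p k u.
Proof.
apply/inCP/inCP => [[Hs Hk Ha]|[Hs Hk Ha]].
  rewrite size_rcons in Hs; rewrite weight_rcons addn0 in Hk.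
  split => //; try lia. move=> m; case: (leqP m (size u)) => Hm.
    by have := Ha m; rewrite /okpre take_rcons_le.
  by have := Ha (size u); rewrite /okpre take_rcons_le // !take_oversize //; lia.
split; [by rewrite size_rcons Hs|by rewrite weight_rcons addn0|].
move=> m; case: (leqP m (size u)) => Hm.
  by have := Ha m; rewrite /okpre take_rcons_le.
rewrite /okpre take_oversize; last by rewrite size_rcons; lia.
rewrite weight_rcons zeros_rcons addn0.
have := Ha (size u); rewrite /okpre take_size; lia.
Qed.

Lemma inC_suf n p k u :
  inC n.+1 p k.+1 (rcons u true) = inC n p k u && (p * k.+1 <= n - k).
Proof.
apply/inCP/andP => [[Hs Hk Ha]|[/inCP [Hs Hk Ha] Hp]].
  rewrite size_rcons in Hs; rewrite weight_rcons addn1 in Hk.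
  have Hs' : size u = n by lia.
  have Hk' : weight u = k by lia.
  split; last first.
    have := Ha n.+1; rewrite /okpre take_oversize; last by rewrite size_rcons; lia.
    by rewrite weight_rcons zeros_rcons zerosE; lia.
  apply/inCP; split => // m; case: (leqP m (size u)) => Hm.
    by have := Ha m; rewrite /okpre take_rcons_le.
  have := Ha (size u); rewrite /okpre take_rcons_le // !take_oversize //; lia.
split; [by rewrite size_rcons Hs|by rewrite weight_rcons addn1 Hk|].
move=> m; case: (leqP m (size u)) => Hm.
  by have := Ha m; rewrite /okpre take_rcons_le.
rewrite /okpre take_oversize; last by rewrite size_rcons; lia.
rewrite weight_rcons zeros_rcons zerosE; lia.
Qed.

Definition nextL (S : pred word) (L : seq word) := greedy_next S L (last [::] L).

Inductive reach (S : pred word) : seq word -> seq word -> Prop :=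
| rrefl0 L : reach S L L
| rstep0 L w L' : nextL S L = Some w -> reach S (rcons L w) L' -> reach S L L'.

Lemma reach_trans S L1 L2 L3 : reach S L1 L2 -> reach S L2 L3 -> reach S L1 L3.
Proof. elim => // L w L' H _ IH /IH; exact: rstep0. Qed.

Lemma reach_rcons S L L' w : reach S L L' -> nextL S L' = Some w -> reach S L (rcons L' w).
Proof. move=> H1 H2; apply: (reach_trans H1); apply: rstep0 H2 (rrefl0 _ _). Qed.

Lemma next_prop S L x w : greedy_next S L x = Some w -> S w && (w \notin L).
Proof.
rewrite greedy_nextE; case E: ohead => [ij|] //= [<-].
have [_ H _] := ohead_filter_minP (pairwise_pairs _) E.
by move: H; rewrite /candP => /and3P [_ -> ->].
Qed.

Lemma reach_inv S L L' : reach S L L' -> uniq L -> all S L ->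
  [/\ uniq L', all S L' & size L < size L' \/ L' = L].
Proof.
elim => [L0|L0 w L1 Hn _ IH] HU HA; first by split => //; right.
have /andP [Sw Nw] := next_prop Hn.
have HU' : uniq (rcons L0 w) by rewrite rcons_uniq Nw HU.
have HA' : all S (rcons L0 w) by rewrite all_rcons Sw HA.
have [U1 A1 Hs] := IH HU' HA'; split => //; left.
case: Hs => [|->]; rewrite size_rcons; lia.
Qed.

Fixpoint allw n : seq word :=
  if n is n'.+1 then map (cons false) (allw n') ++ map (cons true) (allw n') else [:: [::]].

Lemma size_allw n : size (allw n) = 2 ^ n.
Proof. elim: n => //= n IH; rewrite size_cat !size_map IH expnS; lia. Qed.

Lemma mem_allw (w : word) : w \in allw (size w).
Proof.
elim: w => [|b w IH]; first by rewrite /= inE.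
rewrite /= mem_cat; case: b; [rewrite orbC|]; by rewrite map_f.
Qed.

Lemma uniq_bound n (s : seq word) : uniq s -> (forall w, w \in s -> size w = n) -> size s <= 2 ^ n.
Proof.
move=> U H; rewrite -size_allw; apply: uniq_leq_size => // w /H <-; exact: mem_allw.
Qed.

Lemma greedy_aux_reach S a L L' : reach S L L' -> nextL S L' = None ->
  forall f, size L' <= size L + f -> L != [::] -> greedy_aux S f L a = L'.
Proof.
elim => [L0|L0 w L1 Hn R IH] Hst f Hf HL.
  case: f Hf => [|f] _ //=; case: L0 Hst HL => [|x t] //= Hst _.
  by move: Hst; rewrite /nextL /= => ->.
have Hs : size (rcons L0 w) <= size L1.
  elim: R {IH Hf Hst} => // L2 v L3 _ _ IH; move: IH; rewrite size_rcons; lia.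
move: Hs; rewrite size_rcons => Hs.
case: f Hf => [|f] Hf; first lia.
case: L0 Hn HL R {Hs} IH Hf => [|x t] //= Hn _ _ IH Hf.
move: Hn; rewrite /nextL /= => ->; apply: IH => //.
  by move: Hf; rewrite size_rcons /=; lia.
Qed.

Lemma greedy_reach n p k a L' : inC n p k a -> reach (inC n p k) [:: a] L' ->
  nextL (inC n p k) L' = None -> greedy (inC n p k) a = L'.
Proof.
move=> Ha R Hst; rewrite /greedy.
have [U A _] := reach_inv R (erefl _) ltac:(by rewrite /= Ha andbT).
have Hsa : size a = n by case/inCP: Ha.
have Hb : size L' <= 2 ^ n.
  by apply: uniq_bound U _ => w Hw; have /inCP [] := allP A w Hw.
apply: (@greedy_aux_reach _ a _ _ R Hst) => //; rewrite Hsa /=; lia.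
Qed.

Lemma reach_term n p k L : uniq L -> all (inC n p k) L ->
  exists L', reach (inC n p k) L L' /\ nextL (inC n p k) L' = None.
Proof.
move=> U A.
have Hb : size L <= 2 ^ n by apply: uniq_bound U _ => w Hw; have /inCP [] := allP A w Hw.
move: {2}(2 ^ n - size L) (leqnn (2 ^ n - size L)) => d.
elim: d L U A Hb => [|d IH] L U A Hb Hd.
- case E: (nextL (inC n p k) L) => [w|]; last by exists L; split => //; apply: rrefl0.
  have /andP [Sw Nw] := next_prop E.
  have : size (rcons L w) <= 2 ^ n.
    apply: uniq_bound; first by rewrite rcons_uniq Nw U.
    move=> u; rewrite mem_rcons inE => /orP [/eqP ->|Hu]; first by case/inCP: Sw.
    by have /inCP [] := allP A u Hu.
  rewrite size_rcons; lia.
- case E: (nextL (inC n p k) L) => [w|]; last by exists L; split => //; apply: rrefl0.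
  have /andP [Sw Nw] := next_prop E.
  have Hb' : size (rcons L w) <= 2 ^ n.
    apply: uniq_bound; first by rewrite rcons_uniq Nw U.
    move=> u; rewrite mem_rcons inE => /orP [/eqP ->|Hu]; first by case/inCP: Sw.
    by have /inCP [] := allP A u Hu.
  have [L' [R H]] := IH (rcons L w) ltac:(by rewrite rcons_uniq Nw U)
     ltac:(by rewrite all_rcons Sw A) Hb' ltac:(rewrite size_rcons; lia).
  by exists L'; split => //; apply: rstep0 E R.
Qed.

Definition pad (u : word) := rcons u false.
Definition suf (u : word) := rcons u true.

Lemma homtrans_nthi w i j : homtrans w i j -> nth false w i.
Proof. by case/and5P. Qed.

Lemma cand_pad n p k L w i j : i < n -> j < n -> size w = n ->
  candP (inC n.+1 p k) (map pad L) (pad w) (i, j) = candP (inC n p k) L w (i, j).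
Proof.
move=> Hi Hj Hs; rewrite /candP /= /pad homtrans_rcons ?Hs // swap_rcons ?Hs //.
by rewrite inC_pad (mem_map (@rcons_injl _ false)).
Qed.

Lemma embed_next n p k L w v : size w = n ->
  greedy_next (inC n p k) L w = Some v ->
  greedy_next (inC n.+1 p k) (map pad L) (pad w) = Some (pad v).
Proof.
move=> Hs; rewrite greedy_nextE; case E: ohead => [[i0 j0]|] //= [<-].
have [Hin Hc Hmin] := ohead_filter_minP (pairwise_pairs _) E.
rewrite mem_pairs Hs in Hin; case/andP: Hin => Hi0 Hj0.
rewrite greedy_nextE /pad size_rcons Hs.
rewrite (@ohead_filter_min _ _ (i0, j0) (pairwise_pairs _)) /=.
- by rewrite swap_rcons ?Hs.
- rewrite mem_pairs; lia.
- by have := cand_pad p k L Hi0 Hj0 Hs; rewrite /pad => ->.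
- move=> [i j]; rewrite mem_pairs /lexlt /= => /andP [Hi Hj] Hlt.
  have Hi' : i < n by lia.
  case: (ltnP j n) => Hjn.
    have := cand_pad p k L Hi' Hjn Hs; rewrite /pad => ->.
    apply: Hmin => //; by rewrite mem_pairs Hs Hi' Hjn.
  have Hjn' : j = n by lia.
  subst j.
  have Hii : i < i0 by lia.
  rewrite /candP /=; apply/negP => /and3P [Ht _ _].
  case/and5P: Ht => _ _ _ _ /allP /(_ i0).
  rewrite mem_between nth_rcons Hs Hi0.
  move/andP: Hc => [Hc _]; rewrite (homtrans_nthi Hc).
  move=> H; have := H ltac:(lia); done.
Qed.

Lemma le_take (u w : word) : size u = size w ->
  (forall i, nth false u i -> nth false w i) ->
  forall m, weight (take m u) <= weight (take m w) /\ zeros (take m w) <= zeros (take m u).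
Proof.
elim: u w => [|a u IH] [|b w] //= Hs H m.
case: m => [|m] //=.
have H0 := H 0; have [H1 H2] := IH w ltac:(lia) (fun i => H i.+1) m.
rewrite /weight /zeros /= ; rewrite /weight /zeros in H1 H2.
move: H0 => /=; clear H; case: a; case: b => //= H0; try (by have := H0 isT); lia.
Qed.

Lemma clear_one n p k w r : inC n p k w -> r < n -> nth false w r ->
  inC n p k.-1 (set_nth false w r false) /\ 0 < k.
Proof.
move=> /inCP [Hs Hk Ha] Hr Hw.
have Hc : weight (set_nth false w r false) = k.-1.
  by rewrite /weight count_set_nth_ltn ?Hs // -/(weight w) Hk Hw /=; lia.
have Hk0 : 0 < k.
  rewrite -Hk /weight -has_count; apply/(has_nthP false); exists r => //; lia.
split => //; apply/inCP; split => //.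
  by rewrite size_set_nth Hs; lia.
move=> m; have := Ha m; rewrite /okpre.
have [H1 H2] := @le_take (set_nth false w r false) w
   ltac:(by rewrite size_set_nth Hs; lia)
   ltac:(by move=> i; rewrite nth_set_nth /=; case: (i == r)) m.
move=> H3; apply: leq_trans (leq_trans H3 H2).
by rewrite leq_mul2l H1 orbT.
Qed.

Lemma swap_pad_end w r : r < size w ->
  swap (pad w) r (size w) = suf (set_nth false w r false).
Proof.
move=> Hr; apply: (@eq_from_nth _ false).
  rewrite /swap /suf /pad !size_set_nth !size_rcons size_set_nth; lia.
move=> m _; rewrite nth_swap /suf /pad !nth_rcons size_set_nth nth_set_nth /=.
have -> : maxn r.+1 (size w) = size w by lia.
case: (m == size w) / eqP => [->|Hm]; first by rewrite ltnn.
case: (m == r) / eqP => [->|Hmr]; first by rewrite Hr.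
by case: ifP.
Qed.

Lemma embed_stuck n p k L w r : inC n p k w -> r < n -> nth false w r ->
  (forall m, r < m < n -> ~~ nth false w m) ->
  greedy_next (inC n p k) L w = None ->
  greedy_next (inC n.+1 p k) (map pad L) (pad w) = Some (suf (set_nth false w r false)).
Proof.
move=> HC Hr Hw Hz Hst.
have Hs : size w = n by case/inCP: HC.
have [Hh Hk] := clear_one HC Hr Hw.
move: Hst; rewrite greedy_nextE; case E: ohead => [[i0 j0]|] //= _.
have Hno := (ohead_filter_none _ _).1 E.
rewrite greedy_nextE /pad size_rcons Hs.
rewrite (@ohead_filter_min _ _ (r, n) (pairwise_pairs _)) /=.
- by rewrite -Hs -swap_pad_end ?Hs.
- rewrite mem_pairs; lia.
- rewrite /candP /=; apply/and3P; split.
  + rewrite /homtrans size_rcons Hs ltnSn /= !nth_rcons Hs Hr Hw ltnn eqxx /=.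
    have -> : r < n.+1 by lia.
    apply/allP => m; rewrite mem_between => Hm.
    rewrite nth_rcons Hs; have -> : m < n by lia.
    apply: Hz; lia.
  + rewrite -Hs -/(pad w) swap_pad_end ?Hs // /suf.
    have /inCP [_ Hwk Hpre] := HC.
    have := Hpre n; rewrite /okpre take_oversize ?Hs // zerosE Hs Hwk => Hpn.
    have [k' Hk'] : exists k', k = k'.+1 by exists k.-1; lia.
    rewrite Hk' in Hh Hpn *; rewrite inC_suf Hh /=; lia.
  + rewrite -Hs -/(pad w) swap_pad_end ?Hs //.
    apply/mapP => [[u _ Hu]]; move: Hu; rewrite /suf /pad => /rcons_inj; done.
- move=> [i j]; rewrite mem_pairs /lexlt /= => /andP [Hi Hj] Hlt.
  have Hi' : i < n by lia.
  case: (ltnP j n) => Hjn.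
    have := cand_pad p k L Hi' Hjn Hs; rewrite /pad => ->.
    apply: Hno; by rewrite mem_pairs Hs Hi' Hjn.
  have Hjn' : j = n by lia.
  subst j.
  have Hii : i < r by lia.
  rewrite /candP /=; apply/negP => /and3P [Ht _ _].
  case/and5P: Ht => _ _ _ _ /allP /(_ r).
  rewrite mem_between nth_rcons Hs Hr Hw.
  move=> H; have := H ltac:(lia); done.
Qed.

Lemma cand_suf n p k L0 L w i j : i < n -> j < n -> size w = n ->
  p * k.+1 <= n - k -> (forall u, suf u \notin L0) ->
  candP (inC n.+1 p k.+1) (L0 ++ map suf L) (suf w) (i, j) = candP (inC n p k) L w (i, j).
Proof.
move=> Hi Hj Hs Hp H0; rewrite /candP /= /suf homtrans_rcons ?Hs // swap_rcons ?Hs //.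
rewrite inC_suf Hp andbT mem_cat (mem_map (@rcons_injl _ true)).
by have := H0 (swap w i j); rewrite /suf => /negbTE ->.
Qed.

Lemma suf_next n p k L0 L w v : size w = n ->
  p * k.+1 <= n - k -> (forall u, suf u \notin L0) ->
  greedy_next (inC n p k) L w = Some v ->
  greedy_next (inC n.+1 p k.+1) (L0 ++ map suf L) (suf w) = Some (suf v).
Proof.
move=> Hs Hp H0; rewrite greedy_nextE; case E: ohead => [[i0 j0]|] //= [<-].
have [Hin Hc Hmin] := ohead_filter_minP (pairwise_pairs _) E.
rewrite mem_pairs Hs in Hin; case/andP: Hin => Hi0 Hj0.
rewrite greedy_nextE /suf size_rcons Hs.
rewrite (@ohead_filter_min _ _ (i0, j0) (pairwise_pairs _)) /=.
- by rewrite swap_rcons ?Hs.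
- rewrite mem_pairs; lia.
- by have := cand_suf L Hi0 Hj0 Hs Hp H0; rewrite /suf => ->.
- move=> [i j]; rewrite mem_pairs /lexlt /= => /andP [Hi Hj] Hlt.
  have Hi' : i < n by lia.
  case: (ltnP j n) => Hjn.
    have := cand_suf L Hi' Hjn Hs Hp H0; rewrite /suf => ->.
    apply: Hmin => //; by rewrite mem_pairs Hs Hi' Hjn.
  have Hjn' : j = n by lia.
  subst j.
  rewrite /candP /=; apply/negP => /and3P [Ht _ _].
  by case/and5P: Ht => _ _ _; rewrite nth_rcons Hs ltnn eqxx.
Qed.

Lemma suf_stuck n p k L0 L w : size w = n -> 0 < n -> nth false w n.-1 ->
  p * k.+1 <= n - k -> (forall u, suf u \notin L0) ->
  greedy_next (inC n p k) L w = None ->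
  greedy_next (inC n.+1 p k.+1) (L0 ++ map suf L) (suf w) = None.
Proof.
move=> Hs Hn Hw Hp H0; rewrite greedy_nextE; case E: ohead => [[i0 j0]|] //= _.
have Hno := (ohead_filter_none _ _).1 E.
rewrite greedy_nextE /suf size_rcons Hs.
have -> // : ohead [seq x <- pairs n.+1 | candP (inC n.+1 p k.+1) (L0 ++ [seq suf i | i <- L])
        (rcons w true) x] = None.
apply/ohead_filter_none => [[i j]]; rewrite mem_pairs => /andP [Hi Hj].
case: (ltnP i n) => Hin; case: (ltnP j n) => Hjn.
- have := cand_suf L Hin Hjn Hs Hp H0; rewrite /suf => ->.
  by apply: Hno; rewrite mem_pairs Hs Hin Hjn.
- have -> : j = n by lia.
  rewrite /candP /=; apply/negP => /and3P [Ht _ _].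
  by case/and5P: Ht => _ _ _; rewrite nth_rcons Hs ltnn eqxx.
- have -> : i = n by lia.
  rewrite /candP /=; apply/negP => /and3P [Ht _ _].
  case/and5P: Ht => _ _ _; rewrite nth_rcons Hs Hjn.
  case: (j =P n.-1) => [->|Hjn1]; first by rewrite Hw.
  move=> _ /allP /(_ n.-1); rewrite mem_between nth_rcons Hs.
  have -> : n.-1 < n by lia.
  by rewrite Hw => H; have := H ltac:(lia).
- have -> : j = n by lia.
  rewrite /candP /=; apply/negP => /and3P [Ht _ _].
  by case/and5P: Ht => _ _ _; rewrite nth_rcons Hs ltnn eqxx.
Qed.

Lemma last_nonnil (L : seq word) x : L != [::] -> last x L = last [::] L.
Proof. by case: L. Qed.

Lemma embed_reach n p k L L' : reach (inC n p k) L L' -> L != [::] ->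
  all (inC n p k) L -> reach (inC n.+1 p k) (map pad L) (map pad L').
Proof.
elim => [L0|L0 w L1 Hn _ IH] HL HA; first exact: rrefl0.
have /andP [Sw _] := next_prop Hn.
apply: (@rstep0 _ _ (pad w)); last first.
  rewrite -map_rcons; apply: IH; first by case: (L0).
  by rewrite all_rcons Sw HA.
move: Hn; rewrite /nextL.
case: L0 HL HA {IH} => [|x t] // _ HA.
have /inCP [Hsz _ _] := allP HA _ (mem_last x t).
rewrite /= /pad -/(pad x) last_map => Hn.
exact: embed_next Hsz Hn.
Qed.

Lemma suf_reach n p k L0 L L' : reach (inC n p k) L L' -> L != [::] ->
  all (inC n p k) L -> p * k.+1 <= n - k -> (forall u, suf u \notin L0) ->
  reach (inC n.+1 p k.+1) (L0 ++ map suf L) (L0 ++ map suf L').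
Proof.
move=> R; elim: R => [L1|L1 w L2 Hn _ IH] HL HA Hp H0; first exact: rrefl0.
have /andP [Sw _] := next_prop Hn.
apply: (@rstep0 _ _ (suf w)); last first.
  rewrite rcons_cat -map_rcons; apply: IH => //; first by case: (L1).
  by rewrite all_rcons Sw HA.
move: Hn; rewrite /nextL last_cat.
case: L1 HL HA {IH} => [|x t] // _ HA.
have /inCP [Hsz _ _] := allP HA _ (mem_last x t).
rewrite /= -/(suf x) last_map => Hn.
exact: suf_next Hsz Hp H0 Hn.
Qed.

Lemma nseq_rcons k (x : bool) : rcons (nseq k x) x = nseq k.+1 x.
Proof. by elim: k => //= k ->. Qed.

Lemma gamma_suf n k : gamma n.+1 k.+1 = suf (gamma n k).
Proof. by rewrite /gamma /suf subSS rcons_cat nseq_rcons. Qed.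

Lemma weight0 (w : word) : weight w = 0 -> w = nseq (size w) false.
Proof. by elim: w => [|[] w IH] //= H; rewrite -IH. Qed.

Lemma gamma0 n : gamma n 0 = nseq n false.
Proof. by rewrite /gamma subn0 cats0. Qed.

Lemma inC0 n p w : inC n p 0 w -> w = gamma n 0.
Proof. by case/inCP => Hs Hk _; rewrite gamma0 -Hs; apply: weight0. Qed.

Lemma weight_le (w : word) : weight w <= size w.
Proof. exact: count_size. Qed.

Lemma nth_gamma_last n k : 0 < k <= n -> nth false (gamma n k) n.-1.
Proof.
move=> H; rewrite /gamma nth_cat size_nseq.
have -> : (n.-1 < n - k) = false by lia.
rewrite nth_nseq; case: ifP => //; lia.
Qed.

Lemma last_one (w : word) : has id w ->
  exists r, [/\ r < size w, nth false w r & forall m, r < m < size w -> ~~ nth false w m].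
Proof.
elim/last_ind: w => [|s b IH] //.
case: b => H.
  exists (size s); rewrite size_rcons nth_rcons ltnn eqxx; split => // m Hm; lia.
have Hs : has id s by move: H; rewrite -cats1 has_cat /= orbF.
have [r [Hr Hn Hz]] := IH Hs.
exists r; rewrite size_rcons nth_rcons Hr; split => //; first lia.
move=> m Hm; rewrite nth_rcons; case: ifP => Hms; first by apply: Hz; lia.
by case: ifP.
Qed.

Definition onehot n j : word := set_nth false (nseq n false) j true.

Lemma nth_onehot n j m : nth false (onehot n j) m = (m == j).
Proof. by rewrite /onehot nth_set_nth /= nth_nseq; case: (m == j) => //; case: ifP. Qed.

Lemma size_onehot n j : j < n -> size (onehot n j) = n.
Proof. move=> H; rewrite /onehot size_set_nth size_nseq; lia. Qed.

Lemma k1_form n p E : inC n p 1 E -> exists r, r < n /\ E = onehot n r.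
Proof.
move=> HC; have /inCP [Hs Hk _] := HC.
have Hh : has id E by rewrite has_count -/(weight E) Hk.
have [r [Hr Hn _]] := last_one Hh; rewrite Hs in Hr.
have [H0 _] := clear_one HC Hr Hn.
have Hz := inC0 H0; rewrite gamma0 in Hz.
exists r; split => //; apply: (@eq_from_nth _ false).
  by rewrite size_onehot ?Hs.
move=> m _; rewrite nth_onehot.
have := congr1 (fun s => nth false s m) Hz; rewrite nth_set_nth /= nth_nseq.
case: (m =P r) => [->|_] //; by case: ifP.
Qed.

Lemma k1_stuck n p Ly : Ly != [::] -> all (inC n p 1) Ly ->
  nextL (inC n p 1) Ly = None ->
  nextL (inC n.+1 p 1) (rcons (map pad Ly) (suf (nseq n false))) = None.
Proof.
move=> HL HA Hst.
have HE : last [::] Ly \in Ly.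
  by case: (Ly) HL => [|x t] // _; rewrite /=; exact: mem_last.
set E := last [::] Ly in HE *.
have [r [Hr HEr]] := k1_form (allP HA _ HE).
rewrite /nextL last_rcons greedy_nextE /suf size_rcons size_nseq.
rewrite (proj2 (ohead_filter_none _ _)) // => [[i j]]; rewrite mem_pairs => /andP [Hi Hj].
rewrite /candP /=; apply/negP => /and3P [Ht HS Hnot].
case/and5P: Ht => _ _; rewrite !nth_rcons size_nseq !nth_nseq.
case: (ltnP i n) => Hin //.
have Hin' : i = n by lia.
subst i; rewrite eqxx.
case: (ltnP j n) => Hjn; last first.
  have Hjn' : j = n by lia.
  by rewrite Hjn' eqxx.
move=> _ _ _.
have Hsw : swap (rcons (nseq n false) true) n j = pad (onehot n j).
  apply: (@eq_from_nth _ false).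
    rewrite size_swap; try (rewrite size_rcons size_nseq; lia).
    by rewrite /pad !size_rcons size_nseq size_onehot.
  move=> m _; rewrite nth_swap /pad !nth_rcons size_onehot // size_nseq nth_onehot nth_nseq.
  case: (m =P j) => [->|Hmj]; first by rewrite Hjn.
  case: (m =P n) => [->|Hmn]; first by rewrite ltnn.
  by case: (m < n).
rewrite Hsw in HS Hnot; rewrite /pad inC_pad in HS.
move: Hnot; rewrite mem_rcons inE negb_or => /andP [_].
rewrite (mem_map (@rcons_injl _ false)) => /negP; apply.
case: (j =P r) => [->|Hjr]; first by rewrite -HEr.
move: Hst; rewrite /nextL -/E greedy_nextE.
case Eo: ohead => [[a b]|] //= _.
have := (ohead_filter_none _ _).1 Eo (r, j).
have HsE : size E = n by rewrite HEr size_onehot.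
rewrite mem_pairs HsE Hr Hjn => /(_ isT).
have Hsw' : swap E r j = onehot n j.
  apply: (@eq_from_nth _ false); first by rewrite size_swap HsE // size_onehot.
  move=> m _; rewrite nth_swap HEr !nth_onehot.
  by case: (m =P j) => // _; case: (m =P r).
rewrite /candP /= Hsw' HS /=.
have -> : homtrans E r j.
  rewrite /homtrans HsE Hr Hjn HEr !nth_onehot eqxx /=.
  have -> : (j == r) = false by apply/eqP.
  apply/allP => m; rewrite mem_between nth_onehot => Hm.
  apply/eqP => Hmr; subst m; lia.
by rewrite /= negbK.
Qed.

Lemma reach_nonnil S L L' : reach S L L' -> L != [::] -> L' != [::].
Proof. elim => // L0 w L1 _ _ IH _; apply: IH; by case: (L0). Qed.

Lemma last_map_nonnil (f : word -> word) (L : seq word) :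
  L != [::] -> last [::] (map f L) = f (last [::] L).
Proof. by case: L => [|x t] //= _; rewrite last_map. Qed.

Lemma last_in (L : seq word) : L != [::] -> last [::] L \in L.
Proof. by case: L => [|x t] // _; rewrite /=; exact: mem_last. Qed.

Lemma map_nonnil (f : word -> word) (L : seq word) : L != [::] -> map f L != [::].
Proof. by case: L. Qed.

Lemma main n : forall p k alpha, inC n p k alpha -> alpha <> gamma n k ->
  exists L', [/\ reach (inC n p k) [:: alpha] L', nextL (inC n p k) L' = None
             & last [::] L' = gamma n k].
Proof.
elim: n => [|n IH] p k alpha HC Hne.
  have /inCP [Hs Hk _] := HC.
  case: alpha Hs Hk HC Hne => // _ Hk _; rewrite /weight /= in Hk.
  by rewrite -Hk.
case/lastP: alpha HC Hne => [|y b] HC Hne.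
  by have /inCP [] := HC.
have /inCP [Hs0 Hk0 _] := HC.
rewrite size_rcons in Hs0; have Hs : size y = n by lia.
case: b HC Hne Hk0 => HC Hne Hk0.
-
  rewrite weight_rcons /= addn1 in Hk0.
  subst k; move Hwk: (weight y) => k'.
  move: HC; rewrite inC_suf => /andP [Hy Hp].
  rewrite Hwk in Hy Hp Hne.
  have Hyne : y <> gamma n k' by move=> Hg; apply: Hne; rewrite Hg gamma_suf.
  have Hk'1 : 0 < k'.
    case: (leqP k' 0) => // Hk'0; exfalso; apply: Hyne.
    have Ek : k' = 0 by lia.
    by move: Hy; rewrite Ek => /inC0.
  have Hk'n : k' <= n by rewrite -Hs -Hwk; exact: weight_le.
  have [Lh [R St La]] := IH p k' y Hy Hyne.
  have HLh : Lh != [::] := reach_nonnil R isT.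
  have [_ ALh _] := reach_inv R isT ltac:(by rewrite /= Hy).
  have H0 : forall u, suf u \notin ([::] : seq word) by [].
  exists (map suf Lh); split.
  + exact: (suf_reach R isT ltac:(by rewrite /= Hy) Hp H0).
  + have := @suf_stuck n p k' [::] Lh (last [::] Lh).
    rewrite /nextL /= (last_map_nonnil _ HLh) La; apply => //.
    * by rewrite -La; have /inCP [] := allP ALh _ (last_in HLh).
    * lia.
    * apply: nth_gamma_last; lia.
    * by rewrite -La.
  + by rewrite (last_map_nonnil _ HLh) La gamma_suf.
-
  rewrite weight_rcons /= addn0 in Hk0. clear Hk0.
  move: HC; rewrite inC_pad => Hy.
  have Hk1 : 0 < k.
    case: (leqP k 0) => // Hk; exfalso; apply: Hne.
    have Ek : k = 0 by lia.
    move: Hy; rewrite Ek => Hy.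
    by rewrite (inC0 Hy) !gamma0 nseq_rcons.
  have [Ly [R St]] := @reach_term n p k [:: y] isT ltac:(by rewrite /= Hy).
  have HLy : Ly != [::] := reach_nonnil R isT.
  have [ULy ALy _] := reach_inv R isT ltac:(by rewrite /= Hy).
  have HEin : last [::] Ly \in Ly by case: (Ly) HLy => [|x t] // _; rewrite /=; exact: mem_last.
  set E := last [::] Ly in HEin St.
  have HE := allP ALy _ HEin.
  have /inCP [HsE HkE HpreE] := HE.
  have Hh : has id E by rewrite has_count -/(weight E) HkE.
  have [r [Hr Hrn Hrz]] := last_one Hh; rewrite HsE in Hr Hrz.
  have Hnext := embed_stuck HE Hr Hrn Hrz St.
  have R1 : reach (inC n.+1 p k) [:: rcons y false] (rcons (map pad Ly) (suf (set_nth false E r false))).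
    apply: reach_rcons; first exact: (embed_reach R isT ltac:(by rewrite /= Hy)).
    by rewrite /nextL (last_map_nonnil _ HLy).
  have [Hh' _] := clear_one HE Hr Hrn.
  have HpE : p * k <= n - k.
    by have := HpreE n; rewrite /okpre take_oversize ?HsE // zerosE HsE HkE.
  clear HkE HpreE.
  case: (k =P 1) => [Ek1|Ek1].
  + rewrite Ek1 in Hh' R1 ALy St *.
    have Hz := inC0 Hh'; rewrite /= gamma0 in Hz.
    exists (rcons (map pad Ly) (suf (set_nth false E r false))); split => //.
    * by rewrite Hz; apply: k1_stuck.
    * by rewrite last_rcons Hz -gamma0 -gamma_suf.
  + have [k' Ek] : exists k', k = k'.+1 by exists k.-1; lia.
    subst k; rewrite /= in Hh'.
    have Hk'1 : 0 < k' by lia.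
    have Hk'n : k' <= n by have /inCP [<- <- _] := Hh'; exact: weight_le.
    have Hp : p * k'.+1 <= n - k' by lia.
    have Hh'ne : set_nth false E r false <> gamma n k'.
      move=> Hg; have := nth_gamma_last (n:=n) (k:=k') ltac:(lia).
      rewrite -Hg nth_set_nth /=; case: (n.-1 =P r) => // Hnr.
      by apply/negP; apply: Hrz; lia.
    have [Lh [R2 St2 La2]] := IH p k' _ Hh' Hh'ne.
    have HLh : Lh != [::] := reach_nonnil R2 isT.
    have [_ ALh _] := reach_inv R2 isT ltac:(by rewrite /= Hh').
    have H0 : forall u, suf u \notin map pad Ly.
      by move=> u; apply/mapP => [[v _]]; rewrite /suf /pad => /rcons_inj.
    exists (map pad Ly ++ map suf Lh); split.
    * apply: (reach_trans R1); rewrite -cats1.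
      exact: (suf_reach R2 isT ltac:(by rewrite /= Hh') Hp H0).
    * rewrite /nextL last_cat (last_nonnil _ (map_nonnil _ HLh)) (last_map_nonnil _ HLh) La2.
      apply: suf_stuck => //.
      -- by rewrite -La2; have /inCP [] := allP ALh _ (last_in HLh).
      -- lia.
      -- apply: nth_gamma_last; lia.
      -- by rewrite -La2.
    * rewrite last_cat (last_nonnil _ (map_nonnil _ HLh)) (last_map_nonnil _ HLh) La2.
      by rewrite gamma_suf.
Qed.

Unset Implicit Arguments.

Theorem lemma3 (p k n : nat) (alpha : word) :
  (p.+1) * k <= n ->
  inC n p k alpha ->
  alpha <> gamma n k ->
  last alpha (Dp n p k alpha) = gamma n k.
Proof.
move=> _ HC Hne.
have [L' [R St La]] := main HC Hne.
rewrite /Dp (greedy_reach HC R St).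
have HL : L' != [::] := reach_nonnil R isT.
by rewrite (last_nonnil _ HL).
Qed.
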